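(* Let $V$ be a finite set and $E^+,E^-\subseteq\binom{V}{2}$. Let \[ \hat{\mathcal{C}} := \{\hat X\in\mathbb{S}^{\{0\}\cup V}_+ : \hat X_{00}=1,\ \hat X_{ii}=\hat X_{0i}\ \forall i\in V,\ \hat X_{ij}\ge 0\ \forall ij\in E^+,\ \hat X_{ij}\le 0\ \forall ij\in E^-\}. \] Then a point $\hat X\in\hat{\mathcal{C}}$ is a vertex of $\hat{\mathcal{C}}$ if and only if $\operatorname{rank}(\hat X)=1$.
   Context: $0$ is a new index not in $V$. $\mathbb{S}^{W}_+$ denotes the real symmetric positive semidefinite matrices indexed by a finite set $W$, with trace inner product. $\binom{V}{2}$ is the set of 2-element subsets $ij=\{i,j\}$ of $V$. For a convex set $\mathcal{C}$ in a finite-dimensional space $\mathbb{E}$ and $\bar x\in\mathcal{C}$, the normal cone is $N_{\mathcal{C}}(\bar x):=\{c : \langle c,x\rangle\le\langle c,\bar x\rangle\ \forall x\in\mathcal{C}\}$; $\bar x$ is a vertex if $\dim N_{\mathcal{C}}(\bar x)=\dim\mathbb{E}$ (here $\mathbb{E}=\mathbb{S}^{\{0\}\cup V}$). *)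

(* Defs.v *)
From HB Require Import structures.
From mathcomp Require Import all_boot all_order all_algebra.
From mathcomp Require Import reals.
Set Implicit Arguments. Unset Strict Implicit. Unset Printing Implicit Defensive.
Import Order.TTheory GRing.Theory Num.Theory.
Local Open Scope ring_scope.

Section Defs.
Variable R : realType.

Definition symmx m (X : 'M[R]_m) : Prop := X^T = X.

Definition psdmx m (X : 'M[R]_m) : Prop :=
  symmx X /\ forall v : 'cV[R]_m, 0 <= (v^T *m X *m v) 0 0.

Definition trip m (A B : 'M[R]_m) : R := \tr (A^T *m B).

(* The set \hat C; the index set {0} ∪ V is 'I_n.+1 with 0 = ord0 and
   i ∈ V = 'I_n represented by lift ord0 i. *)
Definition hatC n (Ep Em : {set {set 'I_n}}) (X : 'M[R]_n.+1) : Prop :=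
  psdmx X /\ X ord0 ord0 = 1 /\
  (forall i : 'I_n, X (lift ord0 i) (lift ord0 i) = X ord0 (lift ord0 i)) /\
  (forall i j : 'I_n, i != j -> [set i; j] \in Ep ->
      0 <= X (lift ord0 i) (lift ord0 j)) /\
  (forall i j : 'I_n, i != j -> [set i; j] \in Em ->
      X (lift ord0 i) (lift ord0 j) <= 0).

Definition normal_cone m (C : 'M[R]_m -> Prop) (Xb : 'M[R]_m) (c : 'M[R]_m)
  : Prop :=
  symmx c /\ forall X, C X -> trip c X <= trip c Xb.

(* [affdim_is S d]: the (affine) dimension of the nonempty set S is d, i.e.
   the affine hull of S (= x0 + span {x - x0 | x in S} for any x0 in S)
   has dimension d. *)
Definition affdim_is m (S : 'M[R]_m -> Prop) (d : nat) : Prop :=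
  exists2 x0, S x0 &
    (exists s : seq 'M[R]_m, (forall x, x \in s -> S x) /\
        \dim <<[seq (x - x0)%R | x : 'M[R]_m <- s]>>%VS = d) /\
    (forall s : seq 'M[R]_m, (forall x, x \in s -> S x) ->
        (\dim <<[seq (x - x0)%R | x : 'M[R]_m <- s]>>%VS <= d)%N).

Definition is_vertex m (C : 'M[R]_m -> Prop) (Xb : 'M[R]_m) : Prop :=
  C Xb /\ exists d, affdim_is (normal_cone C Xb) d /\ affdim_is (@symmx m) d.

End Defs.

(* Main.v *)
Require Import Defs.
From HB Require Import structures.
From mathcomp Require Import all_boot all_order all_algebra.
From mathcomp Require Import reals.
From mathcomp Require Import ring lra.
Import Order.TTheory GRing.Theory Num.Theory.
Local Open Scope ring_scope.

Module Aux.
Set Implicit Arguments. Unset Strict Implicit.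

Section Basics.
Variable R : realType.
Variable m : nat.
Implicit Types (X Y A B c : 'M[R]_m) (u v w : 'cV[R]_m).

Definition ev (a : 'I_m) : 'cV[R]_m := delta_mx a 0.
Definition bf X u v : R := (u^T *m X *m v) 0 0.
Definition sym u v : 'M[R]_m := u *m v^T + v *m u^T.

Lemma bfE X u v : bf X u v = \sum_a \sum_b u a 0 * X a b * v b 0.
Proof.
rewrite /bf mxE exchange_big /=; apply: eq_bigr => b _; rewrite mxE big_distrl /=.
by apply: eq_bigr => a _; rewrite !mxE.
Qed.

Lemma bfDl X u1 u2 v : bf X (u1 + u2) v = bf X u1 v + bf X u2 v.
Proof. by rewrite /bf linearD /= !mulmxDl mxE. Qed.
Lemma bfDr X u v1 v2 : bf X u (v1 + v2) = bf X u v1 + bf X u v2.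
Proof. by rewrite /bf !mulmxDr mxE. Qed.
Lemma bfZl X k u v : bf X (k *: u) v = k * bf X u v.
Proof. by rewrite /bf linearZ /= -!scalemxAl mxE. Qed.
Lemma bfZr X k u v : bf X u (k *: v) = k * bf X u v.
Proof. by rewrite /bf -!scalemxAr mxE. Qed.
Lemma bfNl X u v : bf X (- u) v = - bf X u v.
Proof. by rewrite -scaleN1r bfZl mulN1r. Qed.
Lemma bfNr X u v : bf X u (- v) = - bf X u v.
Proof. by rewrite -scaleN1r bfZr mulN1r. Qed.
Lemma bfBl X u1 u2 v : bf X (u1 - u2) v = bf X u1 v - bf X u2 v.
Proof. by rewrite bfDl bfNl. Qed.
Lemma bfBr X u v1 v2 : bf X u (v1 - v2) = bf X u v1 - bf X u v2.
Proof. by rewrite bfDr bfNr. Qed.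

Lemma bf_ev X a b : bf X (ev a) (ev b) = X a b.
Proof.
by rewrite /bf /ev trmx_delta -rowE -colE !mxE.
Qed.

Lemma bf_sym X u v : X^T = X -> bf X u v = bf X v u.
Proof.
move=> hX; have h (M : 'M[R]_1) : M 0 0 = M^T 0 0 by rewrite mxE.
by rewrite /bf h !trmx_mul trmxK hX mulmxA.
Qed.

Lemma bf0l X v : bf X 0 v = 0.
Proof. by rewrite /bf linear0 !mul0mx mxE. Qed.

Lemma trip_outer u v Y : trip (u *m v^T) Y = bf Y u v.
Proof.
rewrite /trip /bf trmx_mul trmxK -mulmxA mxtrace_mulC mulmxA mxtrace_mulC trace_mx11 mulmxA.
by [].
Qed.

Lemma tripDl A B Y : trip (A + B) Y = trip A Y + trip B Y.
Proof. by rewrite /trip linearD /= mulmxDl mxtraceD. Qed.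
Lemma tripZl k A Y : trip (k *: A) Y = k * trip A Y.
Proof. by rewrite /trip linearZ /= -scalemxAl mxtraceZ. Qed.
Lemma tripNl A Y : trip (- A) Y = - trip A Y.
Proof. by rewrite -scaleN1r tripZl mulN1r. Qed.
Lemma tripBl A B Y : trip (A - B) Y = trip A Y - trip B Y.
Proof. by rewrite tripDl tripNl. Qed.
Lemma tripDr A B Y : trip Y (A + B) = trip Y A + trip Y B.
Proof. by rewrite /trip mulmxDr mxtraceD. Qed.
Lemma tripZr k A Y : trip Y (k *: A) = k * trip Y A.
Proof. by rewrite /trip -scalemxAr mxtraceZ. Qed.
Lemma trip0l Y : trip 0 Y = 0.
Proof. by rewrite /trip linear0 mul0mx mxtrace0. Qed.

Lemma tripE A B : trip A B = \sum_a \sum_b A a b * B a b.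
Proof.
rewrite /trip /mxtrace (eq_bigr (fun b => \sum_j A j b * B j b)).
  by rewrite exchange_big.
by move=> b _; rewrite mxE; apply: eq_bigr => j _; rewrite !mxE.
Qed.

Lemma trip_sym u v Y : trip (sym u v) Y = bf Y u v + bf Y v u.
Proof. by rewrite /sym tripDl !trip_outer. Qed.

Lemma sym_symmx u v : symmx (sym u v).
Proof. by rewrite /symmx /sym linearD /= !trmx_mul !trmxK addrC. Qed.

End Basics.
Arguments ev {R m}.



Section Sym.
Variable R : realType.
Variable m : nat.

Lemma psd_null (Y : 'M[R]_m) v w : Y^T = Y -> (forall z, 0 <= bf Y z z) ->
  bf Y v v = 0 -> bf Y w v = 0.
Proof.
move=> hs hp hv; set b := bf Y w v; set A := bf Y w w.
have hA : 0 <= A by apply: hp.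
set t := - b / (A + 1).
have ht : t * (A + 1) = - b by rewrite /t divfK // gt_eqF // ltr_wpDl.
have := hp (t *: w + v).
rewrite !bfDl !bfDr !bfZl !bfZr hv (bf_sym v w hs) -/b -/A => h.
have h2 : 0 <= (A + 1) ^+ 2 * (t * (t * A) + t * b + (t * b + 0)).
  by apply: mulr_ge0 => //; apply: sqr_ge0.
have e : (A + 1) ^+ 2 * (t * (t * A) + t * b + (t * b + 0)) =
   (t * (A + 1)) ^+ 2 * A + 2 * (t * (A + 1)) * b * (A + 1) by ring.
rewrite e ht in h2.
have h3 : 0 <= - (b * b) * (A + 2) by move: h2; congr (0 <= _); ring.
have h4 : b * b <= 0 by nra.
have h5 : 0 <= b * b by nra.
have : b * b == 0 by rewrite eq_le h4 h5.
by rewrite mulf_eq0 orbb => /eqP.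
Qed.

Definition s0 : seq 'M[R]_m :=
  [seq sym (ev a) (ev b) | a <- enum 'I_m, b <- enum 'I_m].

Lemma sym_ev a b : sym (ev a) (ev b) = delta_mx a b + delta_mx b a :> 'M[R]_m.
Proof. by rewrite /sym /ev !trmx_delta !mul_delta_mx. Qed.

Lemma s0_in a b : sym (ev a) (ev b) \in <<s0>>%VS.
Proof. by apply: memv_span; apply: allpairs_f; rewrite mem_enum. Qed.

Lemma symW (M : 'M[R]_m) : symmx M -> M \in <<s0>>%VS.
Proof.
move=> hM.
have e : M + M^T = \sum_a \sum_b M a b *: sym (ev a) (ev b).
  have -> : \sum_a \sum_b M a b *: sym (ev a) (ev b) =
     \sum_a \sum_b M a b *: delta_mx a b + (\sum_a \sum_b M a b *: delta_mx a b)^T.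
    rewrite linear_sum -big_split /=; apply: eq_bigr => a _.
    rewrite linear_sum -big_split /=; apply: eq_bigr => b _.
    by rewrite sym_ev scalerDr linearZ /= trmx_delta.
  by rewrite -matrix_sum_delta.
have -> : M = 2^-1 *: (M + M^T).
  by rewrite hM -mulr2n -scaler_nat scalerA mulVf ?pnatr_eq0 // scale1r.
rewrite e; apply: rpredZ; apply: rpred_sum => a _; apply: rpred_sum => b _.
by apply: rpredZ; apply: s0_in.
Qed.

Definition dW := \dim <<s0>>%VS.

Lemma affdim_span (S : 'M[R]_m -> Prop) (s : seq 'M[R]_m) :
  (forall M, S M -> symmx M) -> S 0 -> (forall x, x \in s -> S x) ->
  (forall a b, sym (ev a) (ev b) \in <<s>>%VS) -> affdim_is S dW.
Proof.
move=> hS h0 hs hsp; exists 0 => //; split.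
  exists s; split => //.
  have -> : [seq x - 0 | x <- s] = s by rewrite (eq_map (fun x => subr0 x)) map_id.
  apply/eqP; rewrite eqn_leq /dW; apply/andP; split; apply: dimvS.
    by apply/span_subvP => x hx; apply: symW; apply: hS; apply: hs.
  by apply/span_subvP => x /allpairsP [[a b] [_ _ ->]]; apply: hsp.
move=> s' hs'; apply: dimvS; apply/span_subvP => y /mapP [x hx ->].
by rewrite subr0; apply: symW; apply: hS; apply: hs'.
Qed.

Lemma affdim_symmx : affdim_is (@symmx R m) dW.
Proof.
apply: (affdim_span (s := s0)) => //.
- by rewrite /symmx trmx0.
- by move=> x /allpairsP [[a b] [_ _ ->]]; apply: sym_symmx.
- exact: s0_in.
Qed.

End Sym.


Section Ident.
Variable R : realType.
Variable m : nat.
Implicit Types (u v : 'cV[R]_m).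

Ltac entry := apply/matrixP => i j; rewrite !mxE !big_ord1 !mxE; ring.

Lemma I1 u v : 4 *: sym u v =
  4 *: ((u + v) *m (u + v)^T) - (u + u) *m (u + u)^T - (v + v) *m (v + v)^T.
Proof. rewrite /sym; apply/matrixP => i j; rewrite !mxE !big_ord1 !mxE; ring. Qed.

Lemma I2 (ea e0 : 'cV[R]_m) x :
  (sym ea ea - sym e0 ea) - sym (ea - x *: e0) (ea - x *: e0) + x ^+ 2 *: sym e0 e0
  = (2 * x - 1) *: sym ea e0.
Proof. rewrite /sym; apply/matrixP => i j; rewrite !mxE !big_ord1 !mxE; ring. Qed.

Lemma I2b (ea e0 : 'cV[R]_m) x :
  sym (ea - x *: e0) e0 = sym ea e0 - x *: sym e0 e0.
Proof. rewrite /sym; apply/matrixP => i j; rewrite !mxE !big_ord1 !mxE; ring. Qed.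

Lemma I3 (ea eb e0 : 'cV[R]_m) xa xb :
  sym ea eb = sym (ea - xa *: e0) (eb - xb *: e0) + xb *: sym (ea - xa *: e0) e0
    + xa *: sym (eb - xb *: e0) e0 + (xa * xb) *: sym e0 e0.
Proof. rewrite /sym; apply/matrixP => i j; rewrite !mxE !big_ord1 !mxE; ring. Qed.

Lemma memvZ_inv (U : {vspace 'M[R]_m}) (k : R) (v : 'M[R]_m) :
  k != 0 -> k *: v \in U -> v \in U.
Proof. by move=> hk h; rewrite -(scalerK hk v); apply: memvZ. Qed.

Lemma bf_sumr (X : 'M[R]_m) u I (r : seq I) (P : pred I) (F : I -> 'cV[R]_m) :
  bf X u (\sum_(i <- r | P i) F i) = \sum_(i <- r | P i) bf X u (F i).
Proof.
apply: (big_morph (bf X u) (bfDr X u)).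
by rewrite /bf mulmx0 mxE.
Qed.

Lemma vec_sum (z : 'cV[R]_m) : z = \sum_b z b 0 *: ev b.
Proof.
rewrite {1}(matrix_sum_delta z); apply: eq_bigr => b _.
by rewrite big_ord1 /ev.
Qed.

End Ident.

Section Hat.
Variable R : realType.
Variable n : nat.
Variables Ep Em : {set {set 'I_n}}.
Local Notation m := n.+1.
Local Notation C := (@hatC R n Ep Em).
Implicit Types (Y X : 'M[R]_m).

Lemma hat_sym Y : C Y -> Y^T = Y.
Proof. by case=> [[]]. Qed.
Lemma hat_psd Y : C Y -> forall v, 0 <= bf Y v v.
Proof. by case=> [[_ h]] _ v; apply: h. Qed.
Lemma hat_00 Y : C Y -> Y 0 0 = 1.
Proof. by case=> _ []. Qed.
Lemma hat_diag Y : C Y -> forall a, Y a a = Y 0 a.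
Proof.
case=> _ [_ [h _]] a; case: (unliftP 0 a) => [i ->|->] //.
Qed.
Lemma hat_a0 Y : C Y -> forall a, Y a 0 = Y 0 a.
Proof. by move=> hY a; rewrite -{1}(hat_sym hY) mxE. Qed.

Definition S00 : 'M[R]_m := sym (ev 0) (ev 0).
Definition Gm (a : 'I_m) : 'M[R]_m := sym (ev a) (ev a) - sym (ev 0) (ev a).
Definition Hm (w : 'cV[R]_m) : 'M[R]_m := - (w *m w^T).

Lemma symmxB (A B : 'M[R]_m) : symmx A -> symmx B -> symmx (A - B).
Proof. by rewrite /symmx => hA hB; rewrite linearB /= hA hB. Qed.

Lemma NC_S00 X : C X -> normal_cone C X S00.
Proof.
move=> hX; split; first exact: sym_symmx.
by move=> Y hY; rewrite /S00 !trip_sym !bf_ev (hat_00 hY) (hat_00 hX).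
Qed.

Lemma trip_Gm Y a : C Y -> trip (Gm a) Y = 0.
Proof.
move=> hY; rewrite /Gm tripBl !trip_sym !bf_ev (hat_a0 hY) (hat_diag hY).
by rewrite subrr.
Qed.

Lemma NC_Gm X a : C X -> normal_cone C X (Gm a).
Proof.
move=> hX; split; first by apply: symmxB; apply: sym_symmx.
by move=> Y hY; rewrite !trip_Gm.
Qed.

Lemma NC_Hm X w : C X -> bf X w w = 0 -> normal_cone C X (Hm w).
Proof.
move=> hX hw; split.
  by rewrite /symmx /Hm linearN /= trmx_mul trmxK.
move=> Y hY; rewrite /Hm !tripNl !trip_outer hw oppr0 oppr_le0.
exact: hat_psd.
Qed.

Lemma rank1_entries X : \rank X = 1%N -> X 0 0 = 1 ->
  forall a b, X a b = X a 0 * X 0 b.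
Proof.
move=> hr h00.
suff: forall r (Cb : 'M[R]_(m, r)) (Rb : 'M[R]_(r, m)), r = 1%N -> Cb *m Rb = X ->
  forall a b, X a b = X a 0 * X 0 b by apply; [exact: hr | exact: mulmx_base].
move=> r Cb Rb hr1; subst r => hX a b.
rewrite -[LHS]mulr1 -h00 -hX !mxE !big_ord1; ring.
Qed.

Definition uv X (a : 'I_m) : 'cV[R]_m := ev a - X a 0 *: ev 0.

Definition sN X : seq 'M[R]_m :=
  S00 :: [seq Gm a | a <- enum 'I_m] ++
  [seq Hm (uv X a + uv X b) | a <- enum 'I_m, b <- enum 'I_m].

Lemma rank1_vertex X : C X -> \rank X = 1%N -> is_vertex C X.
Proof.
move=> hX hr.
have hE := rank1_entries hr (hat_00 hX).
have hs := hat_sym hX.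
have hu0 a z : bf X (uv X a) z = 0.
  rewrite (vec_sum z) bf_sumr big1 // => b _.
  by rewrite bfZr /uv bfBl bfZl !bf_ev (hE a b) subrr mulr0.
split => //; exists (dW R m); split; last exact: affdim_symmx.
apply: (affdim_span (s := sN X)).
- by move=> M [].
- split; first by rewrite /symmx trmx0.
  by move=> Y _; rewrite !trip0l.
- move=> x; rewrite inE => /orP [/eqP -> | ]; first exact: NC_S00.
  rewrite mem_cat => /orP [/mapP [a _ ->] | /allpairsP [[a b] [_ _ ->]]].
    exact: NC_Gm.
  by apply: NC_Hm => //; rewrite bfDl !hu0 addr0.
- set Sp := <<sN X>>%VS.
  have inS00 : S00 \in Sp by apply: memv_span; rewrite mem_head.
  have inG a : Gm a \in Sp.
    by apply: memv_span; rewrite inE mem_cat map_f ?orbT // mem_enum.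
  have inH a b : Hm (uv X a + uv X b) \in Sp.
    apply: memv_span; rewrite inE mem_cat.
    by rewrite (allpairs_f (fun a b => Hm (uv X a + uv X b))) ?orbT // mem_enum.
  have inO a b : (uv X a + uv X b) *m (uv X a + uv X b)^T \in Sp.
    by rewrite -[_ *m _]opprK rpredN; apply: inH.
  have iu a b : sym (uv X a) (uv X b) \in Sp.
    have : 4 *: sym (uv X a) (uv X b) \in Sp.
      rewrite I1; apply: rpredB; first apply: rpredB.
      - by apply: rpredZ.
      - exact: inO.
      - exact: inO.
    by apply: memvZ_inv; rewrite pnatr_eq0.
  have ie0 a : sym (ev a) (ev 0) \in Sp.
    have hx : X a 0 ^+ 2 = X a 0.
      by rewrite expr2 {2}(hat_a0 hX a) -(hE a a) (hat_diag hX) -(hat_a0 hX).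
    have hc : (2 * X a 0 - 1) != 0.
      apply/eqP => h0; have : (2 * X a 0 - 1) ^+ 2 = 0 by rewrite h0 expr0n.
      have -> : (2 * X a 0 - 1) ^+ 2 = 4 * (X a 0 ^+ 2 - X a 0) + 1 by ring.
      by rewrite hx subrr mulr0 add0r => /eqP; rewrite oner_eq0.
    apply: (memvZ_inv hc); rewrite -I2; apply: rpredD; first apply: rpredB.
    - exact: inG.
    - exact: iu.
    - exact: rpredZ.
  have iue a : sym (uv X a) (ev 0) \in Sp.
    by rewrite /uv I2b; apply: rpredB => //; apply: rpredZ.
  move=> a b; rewrite (I3 _ _ (ev 0) (X a 0) (X b 0)).
  apply: rpredD; first apply: rpredD; first apply: rpredD.
  - exact: iu.
  - by apply: rpredZ; apply: iue.
  - by apply: rpredZ; apply: iue.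
  - by apply: rpredZ.
Qed.

End Hat.


Section Real.
Variable R : realType.

Lemma lem_le0 (d y k : R) : 0 < d ->
  (forall s, 0 < s -> s <= d -> 2 * s * (1 - s ^+ 2) * y <= 4 * s ^+ 2 * k) -> y <= 0.
Proof.
move=> hd H; rewrite leNgt; apply/negP => hy.
have hk : 0 < 4 * (`|k| + 1) by apply: mulr_gt0 => //; rewrite ltr_wpDl.
set s := Num.min (Num.min d (2^-1)) (y / (4 * (`|k| + 1))).
have s1 : s <= d by rewrite /s !ge_min lexx.
have s2 : s <= 2^-1 by rewrite /s !ge_min lexx orbT.
have s3 : s <= y / (4 * (`|k| + 1)) by rewrite /s !ge_min lexx orbT.
have s0 : 0 < s by rewrite /s !lt_min hd invr_gt0 ltr0n divr_gt0.
have s4 : s * (4 * (`|k| + 1)) <= y by rewrite -ler_pdivlMr.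
have h := H s s0 s1.
have hkk : k <= `|k| by apply: ler_norm.
have h5 : s <= 1/2 by rewrite div1r.
have h6 : (1 - s ^+ 2) * y <= 2 * s * k.
  have : 2 * s * ((1 - s ^+ 2) * y - 2 * s * k) <= 0.
    by move: h; rewrite -subr_le0 => h; apply: le_trans h; rewrite le_eqVlt; apply/orP; left; apply/eqP; ring.
  rewrite pmulr_rle0 ?subr_le0 //; nra.
have h7 : 2 * s * k <= y / 2.
  have : 2 * s * k <= 2 * s * (`|k| + 1) by nra.
  move=> h8; apply: (le_trans h8); nra.
have h9 : s ^+ 2 <= 1/4 by nra.
nra.
Qed.

Lemma lem_eq0 (d y k : R) : 0 < d ->
  (forall s, `|s| <= d -> 2 * s * (1 - s ^+ 2) * y <= 4 * s ^+ 2 * k) -> y = 0.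
Proof.
move=> hd H.
have h1 : y <= 0.
  apply: (lem_le0 hd (k := k)) => s s0 sd; apply: H.
  by rewrite ger0_norm //; apply: ltW.
have h2 : - y <= 0.
  apply: (lem_le0 hd (k := k)) => s s0 sd.
  have := H (- s); rewrite normrN ger0_norm; last exact: ltW.
  move=> /(_ sd) h.
  have e1 : 2 * s * (1 - s ^+ 2) * - y = 2 * - s * (1 - (- s) ^+ 2) * y by ring.
  have e2 : 4 * s ^+ 2 * k = 4 * (- s) ^+ 2 * k by ring.
  by rewrite e1 e2.
lra.
Qed.

End Real.

Section Neg.
Variable R : realType.
Variable n : nat.
Variables Ep Em : {set {set 'I_n}}.
Local Notation m := n.+1.
Local Notation C := (@hatC R n Ep Em).

Lemma quad_col (A B Y : 'M[R]_m) k l :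
  (A^T *m Y *m B) k l = bf Y (col k A) (col l B).
Proof. by rewrite -bf_ev /bf /ev !colE trmx_mul !mulmxA. Qed.

Lemma beta_ex (X : 'M[R]_m) : C X -> \rank X != 1%N ->
  exists beta, bf X (ev 0) beta = 0 /\ bf X beta beta = 1.
Proof.
move=> hX hr.
have hs := hat_sym hX; have hp := hat_psd hX.
pose g (j : 'I_m) : 'cV[R]_m := ev j - X 0 j *: ev 0.
have hg0 j : bf X (ev 0) (g j) = 0.
  by rewrite /g bfBr bfZr !bf_ev (hat_00 hX) mulr1 subrr.
case: (boolP [exists j, bf X (g j) (g j) != 0]) => [/existsP [j hj] | /existsPn hn].
  have hk : 0 < bf X (g j) (g j) by rewrite lt_def hj hp.
  set k := bf X (g j) (g j) in hk hj *.
  exists ((Num.sqrt k)^-1 *: g j); split; first by rewrite bfZr hg0 mulr0.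
  rewrite bfZl bfZr -/k mulrA -invfM -expr2 sqr_sqrtr ?ltW //.
  by rewrite mulVf.
exfalso; move: hr; apply/negP; rewrite negbK.
have hz j i : bf X (ev i) (g j) = 0.
  by apply: psd_null => //; apply/eqP; rewrite -[_ == 0]negbK hn.
have eX : X = col 0 X *m row 0 X.
  apply/matrixP => i j; rewrite !mxE big_ord1 !mxE.
  have := hz j i; rewrite /g bfBr bfZr !bf_ev => /eqP; rewrite subr_eq0 => /eqP ->.
  by rewrite mulrC.
apply/eqP; apply/eqP; rewrite eqn_leq; apply/andP; split.
  by rewrite {1}eX; apply: leq_trans (mxrankM_maxl _ _) (rank_leq_col _).
rewrite lt0n mxrank_eq0; apply/eqP => h0.
by move: (hat_00 hX); rewrite h0 mxE => /eqP; rewrite eq_sym oner_eq0.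
Qed.


Lemma mulX_entry (X B : 'M[R]_m) k l : (X *m B) k l = bf X (ev k) (col l B).
Proof. by have := quad_col 1%:M B X k l; rewrite trmx1 mul1mx col1. Qed.
Lemma mulXt_entry (X B : 'M[R]_m) k l : (B^T *m X) k l = bf X (col k B) (ev l).
Proof. by have := quad_col B 1%:M X k l; rewrite mulmx1 col1. Qed.

Section Curve.
Variable X : 'M[R]_m.
Hypothesis hX : C X.
Variable beta : 'cV[R]_m.
Hypotheses (hb0 : bf X (ev 0) beta = 0) (hb1 : bf X beta beta = 1).

Definition q a := bf X beta (ev a).
Definition r a := q a / X a a.
Definition Bm : 'M[R]_m :=
  \matrix_(a, b) if b == 0 then beta a 0 else (a == b)%:R * r b.
Definition Ym := X *m Bm + Bm^T *m X.
Definition Zm := Bm^T *m X *m Bm.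

Lemma hXs : X^T = X. Proof. exact: hat_sym hX. Qed.

Lemma q0 : q 0 = 0.
Proof. by rewrite /q bf_sym ?hXs. Qed.

Lemma X0a a : X 0 a = X a a.
Proof. by rewrite (hat_diag hX). Qed.

Lemma rX a : r a * X a a = q a.
Proof.
rewrite /r; have [h0 | hn] := eqVneq (X a a) 0.
  rewrite h0 mulr0; apply/esym; apply: psd_null; first exact: hXs.
    exact: hat_psd hX.
  by rewrite bf_ev.
by rewrite divfK.
Qed.

Lemma colB0 : col 0 Bm = beta.
Proof. by apply/matrixP => i j; rewrite (ord1 j) !mxE eqxx. Qed.

Lemma colBa a : a != 0 -> col a Bm = r a *: ev a.
Proof.
move=> ha; apply/matrixP => i j; rewrite (ord1 j) !mxE (negbTE ha) eqxx andbT.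
by rewrite mulrC.
Qed.

Lemma Ym_ne0 : Ym != 0.
Proof.
have [a ha] : exists a, q a != 0.
  case: (boolP [exists a, q a != 0]) => [/existsP // | /existsPn hn].
  move: hb1; rewrite {2}(vec_sum beta) bf_sumr big1 => [/eqP|b _].
    by rewrite eq_sym oner_eq0.
  by rewrite bfZr; move: (hn b); rewrite negbK /q => /eqP ->; rewrite mulr0.
have a0 : a != 0 by apply: contraNneq ha => ->; rewrite q0.
apply/eqP => /matrixP /(_ a 0); rewrite /Ym [X in X = _]mxE mulX_entry mulXt_entry colB0 mxE.
rewrite (colBa a0) bfZl bf_ev (hat_a0 hX) X0a rX.
rewrite bf_sym ?hXs // -/(q a) => /eqP; rewrite -mulr2n mulrn_eq0 /=.
by rewrite (negbTE ha).
Qed.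

Definition lam (s : R) := (1 + s ^+ 2)^-1.
Definition Tm (s : R) : 'M[R]_m :=
  lam s *: ((1 - s ^+ 2) *: 1%:M + (2 * s) *: Bm).
Definition Xs s := (Tm s)^T *m X *m Tm s.

Lemma Xs_expand s : Xs s = lam s ^+ 2 *:
  ((1 - s ^+ 2) ^+ 2 *: X + (2 * s * (1 - s ^+ 2)) *: Ym + (4 * s ^+ 2) *: Zm).
Proof.
have tT : (Tm s)^T = lam s *: ((1 - s ^+ 2) *: 1%:M + (2 * s) *: Bm^T).
  by rewrite /Tm !linearZ /= linearD /= !linearZ /= trmx1.
rewrite /Xs tT /Tm.
rewrite -!scalemxAl -!scalemxAr !mulmxDl !mulmxDr -!scalemxAl -!scalemxAr.
rewrite !mul1mx !mulmx1 !scalerA /Ym /Zm -expr2.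
congr (_ *: _); rewrite scalerDr !addrA; congr (_ + _ + _ + _); congr (_ *: _); ring.
Qed.


Definition tau s a := lam s * ((1 - s ^+ 2) + 2 * s * r a).

Lemma colT0 s : col 0 (Tm s) = lam s *: ((1 - s ^+ 2) *: ev 0 + (2 * s) *: beta).
Proof. by apply/matrixP => i j; rewrite (ord1 j) !mxE !eqxx /= !andbT. Qed.

Lemma colTa s a : a != 0 -> col a (Tm s) = tau s a *: ev a.
Proof.
move=> ha; apply/matrixP => i j; rewrite (ord1 j) !mxE (negbTE ha) !eqxx andbT.
rewrite /tau; ring.
Qed.

Lemma lam_gt0 s : 0 < lam s.
Proof. by rewrite /lam invr_gt0; apply: ltr_wpDr; [apply: sqr_ge0 | ]. Qed.

Lemma lamK s : lam s * (1 + s ^+ 2) = 1.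
Proof. by rewrite /lam mulVf // gt_eqF // ltr_wpDr // sqr_ge0. Qed.

Lemma Xs_entry s k l : Xs s k l = bf X (col k (Tm s)) (col l (Tm s)).
Proof. exact: quad_col. Qed.

Lemma Xs00 s : Xs s 0 0 = 1.
Proof.
rewrite Xs_entry colT0 bfZl bfZr !bfDl !bfDr !bfZl !bfZr !bf_ev hb0 hb1.
rewrite (bf_sym _ _ hXs) hb0 (hat_00 hX).
have h := lamK s.
have -> : lam s * (lam s * ((1 - s ^+ 2) * ((1 - s ^+ 2) * 1) + (1 - s ^+ 2) * (2 * s * 0)
  + ((2 * s) * ((1 - s ^+ 2) * 0) + 2 * s * (2 * s * 1))))
  = (lam s * (1 + s ^+ 2)) ^+ 2 by ring.
by rewrite h expr1n.
Qed.

Lemma Xs0a s a : a != 0 -> Xs s 0 a = Xs s a a.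
Proof.
move=> ha; rewrite !Xs_entry colT0 (colTa s ha) !bfZl !bfZr bfDl !bfZl !bf_ev.
rewrite -/(q a) X0a -(rX a) /tau; ring.
Qed.

Lemma Xsab s a b : a != 0 -> b != 0 -> Xs s a b = tau s a * tau s b * X a b.
Proof.
move=> ha hb; rewrite Xs_entry (colTa s ha) (colTa s hb) bfZl bfZr bf_ev; ring.
Qed.

Definition Msum := \sum_a `|r a|.
Definition d0 := (2 * Msum + 2)^-1.

Lemma d0_gt0 : 0 < d0.
Proof.
rewrite /d0 invr_gt0; apply: ltr_wpDl => //.
by apply: mulr_ge0 => //; apply: sumr_ge0 => a _.
Qed.

Lemma inner_ge0 (M ra s : R) : 0 <= M -> `|ra| <= M -> `|s| <= (2 * M + 2)^-1 ->
  0 <= 1 - s ^+ 2 + 2 * s * ra.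
Proof.
move=> hM hr hs.
have hp : 0 < 2 * M + 2 by lra.
have h1 : `|s| * (2 * M + 2) <= 1 by move: hs; rewrite -[X in _ <= X]div1r ler_pdivlMr.
have h2 : - (`|s| * M) <= s * ra.
  have : `|s * ra| <= `|s| * M by rewrite normrM; apply: ler_wpM2l.
  move=> h; have h5 : - (s * ra) <= `|s * ra| by rewrite -normrN ler_norm.
  lra.
have h3 : s ^+ 2 = `|s| ^+ 2 by rewrite real_normK ?num_real.
have h4 : 0 <= `|s| by [].
rewrite h3; nra.
Qed.

Lemma tau_ge0 s a : `|s| <= d0 -> 0 <= tau s a.
Proof.
move=> hs; rewrite /tau; apply: mulr_ge0; first exact: ltW (lam_gt0 s).
have hM : 0 <= Msum by apply: sumr_ge0.
have hra : `|r a| <= Msum.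
  rewrite /Msum (bigD1 a) //= lerDl; by apply: sumr_ge0.
by have := inner_ge0 hM hra hs.
Qed.

Lemma Xs_in s : `|s| <= d0 -> C (Xs s).
Proof.
move=> hs; split.
  split.
    by rewrite /symmx /Xs !trmx_mul trmxK hXs mulmxA.
  move=> v; have := hat_psd hX (Tm s *m v).
  by rewrite /bf /Xs !trmx_mul !mulmxA.
split; first exact: Xs00.
split; first by move=> i; rewrite Xs0a // eq_sym neq_lift.
have hl i : lift 0 i != 0 :> 'I_m by rewrite eq_sym neq_lift.
split.
  move=> i j hij he; rewrite Xsab //; apply: mulr_ge0.
    by apply: mulr_ge0; apply: tau_ge0.
  by case: hX => _ [_ [_ [h _]]]; apply: h.
move=> i j hij he; rewrite Xsab //; apply: mulr_ge0_le0.
  by apply: mulr_ge0; apply: tau_ge0.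
by case: hX => _ [_ [_ [_ h]]]; apply: h.
Qed.

Lemma trip_Y0 c : normal_cone C X c -> trip c Ym = 0.
Proof.
case=> _ H.
apply: (lem_eq0 d0_gt0 (k := trip c X - trip c Zm)) => s hs.
have := H _ (Xs_in hs); rewrite Xs_expand tripZr !tripDr !tripZr.
set A := _ + _ + _ => h.
have hp : 0 <= (1 + s ^+ 2) ^+ 2 by apply: sqr_ge0.
have h2 := ler_wpM2l hp h.
have e : (1 + s ^+ 2) ^+ 2 * (lam s ^+ 2 * A) = (lam s * (1 + s ^+ 2)) ^+ 2 * A by ring.
rewrite e lamK expr1n mul1r /A in h2.
rewrite -subr_ge0; move: h2; rewrite -subr_ge0.
move=> h3; apply: (le_trans h3); rewrite le_eqVlt; apply/orP; left; apply/eqP.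
rewrite /Ym !tripDr; ring.
Qed.

End Curve.
End Neg.


Section Final.
Variable R : realType.
Variable n : nat.
Variables Ep Em : {set {set 'I_n}}.
Local Notation m := n.+1.
Local Notation C := (@hatC R n Ep Em).

Lemma symmxD (A B : 'M[R]_m) : symmx A -> symmx B -> symmx (A + B).
Proof. by rewrite /symmx => hA hB; rewrite linearD /= hA hB. Qed.

Lemma tripYY (Y : 'M[R]_m) : Y != 0 -> trip Y Y != 0.
Proof.
move=> hY; apply: contra hY => /eqP h; apply/eqP/matrixP => a b; rewrite mxE.
have sq (x : R) : 0 <= x * x by rewrite -expr2; apply: sqr_ge0.
have h0 i : 0 <= \sum_j Y i j * Y i j by apply: sumr_ge0 => j _.
move: h; rewrite tripE => h.
have h1 := psumr_eq0P (fun i _ => h0 i) h (i := a) isT.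
have h2 := psumr_eq0P (fun j _ => sq (Y a j)) h1 (i := b) isT.
by move: h2 => /eqP; rewrite mulf_eq0 orbb => /eqP.
Qed.

Lemma trip_suml (Y : 'M[R]_m) I (r : seq I) (P : pred I) (F : I -> 'M[R]_m) :
  trip (\sum_(i <- r | P i) F i) Y = \sum_(i <- r | P i) trip (F i) Y.
Proof.
apply: (big_morph (fun A => trip A Y) (fun A B => tripDl A B Y)).
exact: trip0l.
Qed.

Lemma not_vertex (X : 'M[R]_m) : C X -> \rank X != 1%N -> ~ is_vertex C X.
Proof.
move=> hX hr [_ [d [[x0 hx0 [[sN [hsN hdim]] _]] [z0 hz0 [_ hub]]]]].
have [beta [hb0 hb1]] := beta_ex hX hr.
set Y := Ym X beta.
have hY0 c : normal_cone C X c -> trip c Y = 0 := fun h => trip_Y0 hX hb0 hb1 h.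
have hYn : Y != 0 := Ym_ne0 hX hb0 hb1.
set L := [seq x - x0 | x <- sN].
have hU u : u \in <<L>>%VS -> trip u Y = 0.
  move=> hu; rewrite (coord_span (X := in_tuple L) hu) trip_suml big1 // => i _.
  rewrite tripZl; have : L`_i \in L by apply: mem_nth.
  case/mapP => x hx ->; rewrite tripBl !hY0 ?subrr ?mulr0 //; exact: hsN.
have hYU : Y \notin <<L>>%VS.
  by apply/negP => /hU /eqP; apply/negP; apply: tripYY.
set s' := [seq x - x0 + z0 | x <- sN] ++ [:: Y + z0].
have hs' : forall x, x \in s' -> symmx x.
  move=> x; rewrite mem_cat => /orP [/mapP [y hy ->] | ].
    apply: symmxD => //; apply: symmxB; [exact: (hsN y hy).1 | exact: hx0.1].
  rewrite inE => /eqP ->; apply: symmxD => //.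
  rewrite /symmx /Y /Ym linearD /= !trmx_mul trmxK (hat_sym hX) addrC //.
have := hub s' hs'.
have -> : [seq x - z0 | x <- s'] = L ++ [:: Y].
  rewrite map_cat /= addrK -map_comp; congr (_ ++ _).
  by apply: eq_map => x /=; rewrite addrK.
rewrite span_cat -hdim => hle.
have : (<<L>> == <<L>> + <<[:: Y]>>)%VS by rewrite eqEdim addvSl hle.
move/eqP => e; move: hYU; rewrite e; apply/negP; rewrite negbK.
apply: (subv_trans _ (addvSr _ _)) => //; first by apply: memv_span; rewrite mem_head.
Qed.

End Final.

End Aux.
Import Aux.

Theorem theorem3p1 (R : realType) (n : nat) (Ep Em : {set {set 'I_n}})
  (HEp : forall e, e \in Ep -> #|e| = 2%N)
  (HEm : forall e, e \in Em -> #|e| = 2%N)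
  (X : 'M[R]_n.+1) (HX : hatC Ep Em X) :
  is_vertex (hatC Ep Em) X <-> \rank X = 1%N.
Proof.
split => [hv | hr]; last exact: rank1_vertex.
apply/eqP; apply/negPn/negP => hr; exact: (not_vertex HX hr hv).
Qed.
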